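(* (Equivalent form of the basic scheme.) Let $u:P\to\mathbb{R}^3$ be a $\Lambda$-periodic field whose Fourier transform satisfies $\hat u(0)=\hat u((\pi,\pi,\pi))=0$, and let $\sigma^{(m)},\tau^{(m)}$ ($m=1,2$) be computed from $u$. Then for every $q\in\mathcal{Q}_N$, $$\Omega(q)\cdot\big\{-\hat\tau^{(1)}(q)\cdot\overline{D(q)}+\hat\tau^{(2)}(q)\cdot D(q)\big\}=\hat u(q)-\Omega(q)\cdot\big\{\hat\sigma^{(1)}(q)\cdot\overline{D(q)}-\hat\sigma^{(2)}(q)\cdot D(q)\big\}.$$ Equivalently, for every $q\in\mathcal{Q}_N$ and every $v\in\mathbb{C}^3$ with $v=0$ when $D(q)=0$: $\Omega(q)\cdot\big\{(\lambda^0:(D(q)\otimes_s v))\cdot\overline{D(q)}+(\lambda^0:(\overline{D(q)}\otimes_s v))\cdot D(q)\big\}=v$.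
   Context: Setting: $N_1,N_2,N_3$ even, $N=N_1N_2N_3$, $\Lambda=N_1\mathbb{Z}\times N_2\mathbb{Z}\times N_3\mathbb{Z}$; strain grid $S=\mathbb{Z}^3$, displacement grid $P=(\tfrac12,\tfrac12,\tfrac12)+\mathbb{Z}^3$, fields $\Lambda$-periodic, sums over one period. $\hat f(q)=\frac1N\sum_r f(r)e^{-iq\cdot r}$, $q\in\mathcal{Q}_N=\{(2\pi h_1/N_1,2\pi h_2/N_2,2\pi h_3/N_3):0\le h_i\le N_i-1\}$. $T=\{\tfrac12(1,1,1),\tfrac12(1,-1,-1),\tfrac12(-1,1,-1),\tfrac12(-1,-1,1)\}$, $D_i(q)=\sum_{e\in T}e_ie^{iq\cdot e}$. For scalar $f$ on $P$, $r\in S$: $D^+_i[f](r)=\sum_{e\in T}e_if(r+e)$, $D^-_i[f](r)=-\sum_{e\in T}e_if(r-e)$. $\delta\epsilon^{(m)}_{ij}=\frac12(D^{\pm}_i[u_j]+D^{\pm}_j[u_i])$ ($+$ for $m=1$, $-$ for $m=2$), $\epsilon^{(m)}=\bar\epsilon+\delta\epsilon^{(m)}$ ($\bar\epsilon$ fixed symmetric), $\sigma^{(m)}=\lambda(r):(\epsilon^{(m)}-\epsilon^0(r))$ with periodic stiffness $\lambda(r)$ (minor and major symmetries) and periodic symmetric eigenstrain $\epsilon^0$; $\tau^{(m)}=\sigma^{(m)}-\lambda^0:\epsilon^{(m)}$ with $\lambda^0$ constant, with minor and major symmetries, positive definite on symmetric matrices. $M_{jk}(q)=\sum_{i,l}\lambda^0_{ijkl}(\overline{D_i}D_l+D_i\overline{D_l})(q)$;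 $\Omega(q)=M(q)^{-1}$ if $D(q)\ne0$ and $\Omega(q)=0$ otherwise. Notation: $(a\otimes_s b)_{ij}=\frac12(a_ib_j+a_jb_i)$, $(\sigma\cdot v)_i=\sum_j\sigma_{ij}v_j$, $(\lambda:\xi)_{ij}=\sum_{kl}\lambda_{ijkl}\xi_{kl}$, overline = complex conjugation. *)

(* Defs.v *)
From HB Require Import structures.
From mathcomp Require Import all_boot all_order all_algebra.
From mathcomp Require Import reals trigo.
From mathcomp Require Import complex.
Set Implicit Arguments. Unset Strict Implicit. Unset Printing Implicit Defensive.
Import Order.TTheory GRing.Theory Num.Theory.
Local Open Scope ring_scope.

Section Defs.
Variable R : realType.
Local Notation C := (R[i]).

Definition toC (x : R) : C := (x%:C)%C.

Definition expi (t : R) : C := Complex (cos t) (sin t).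

Definition vec3 (x y z : R) : 'cV[R]_3 := \col_(i < 3) [:: x; y; z]`_i.

Definition dotp (a b : 'cV[R]_3) : R := \sum_(i < 3) a i ord0 * b i ord0.

Definition lat (a b c : int) : 'cV[R]_3 := vec3 a%:~R b%:~R c%:~R.

(* base points: S = 0 + Z^3, P = (1/2,1/2,1/2) + Z^3 *)
Definition baseS : 'cV[R]_3 := 0.
Definition baseP : 'cV[R]_3 := vec3 (1/2) (1/2) (1/2).

Definition Tset : seq 'cV[R]_3 :=
  [:: vec3 (1/2) (1/2) (1/2); vec3 (1/2) (-(1/2)) (-(1/2));
      vec3 (-(1/2)) (1/2) (-(1/2)); vec3 (-(1/2)) (-(1/2)) (1/2)].

Definition periodic_on (T : Type) (N1 N2 N3 : nat) (base : 'cV[R]_3)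
  (f : 'cV[R]_3 -> T) : Prop :=
  forall k1 k2 k3 a b c : int,
    f (base + lat (k1 + a * N1%:Z) (k2 + b * N2%:Z) (k3 + c * N3%:Z))
    = f (base + lat k1 k2 k3).

Definition fhat (N1 N2 N3 : nat) (base : 'cV[R]_3) (f : 'cV[R]_3 -> C)
  (q : 'cV[R]_3) : C :=
  (N1 * N2 * N3)%:R^-1 *
  \sum_(a < N1) \sum_(b < N2) \sum_(c < N3)
     f (base + lat a b c) * expi (- dotp q (base + lat a b c)).

Definition vhatP N1 N2 N3 (u : 'cV[R]_3 -> 'cV[R]_3) (q : 'cV[R]_3)
  : 'cV[C]_3 :=
  \col_(j < 3) fhat N1 N2 N3 baseP (fun r => toC (u r j ord0)) q.

Definition mhatS N1 N2 N3 (s : 'cV[R]_3 -> 'M[R]_3) (q : 'cV[R]_3)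
  : 'M[C]_3 :=
  \matrix_(i < 3, j < 3) fhat N1 N2 N3 baseS (fun r => toC (s r i j)) q.

Definition qvec (N1 N2 N3 : nat) (h1 : 'I_N1) (h2 : 'I_N2) (h3 : 'I_N3)
  : 'cV[R]_3 :=
  vec3 (2 * pi * h1%:R / N1%:R) (2 * pi * h2%:R / N2%:R)
       (2 * pi * h3%:R / N3%:R).

Definition Dvec (q : 'cV[R]_3) : 'cV[C]_3 :=
  \col_(i < 3) \sum_(e <- Tset) toC (e i ord0) * expi (dotp q e).

Definition conjv (v : 'cV[C]_3) : 'cV[C]_3 := map_mx (@conjc R) v.

Definition tensor4 := 'I_3 -> 'I_3 -> 'I_3 -> 'I_3 -> R.

Definition minor_sym (L : tensor4) : Prop :=
  forall i j k l, L i j k l = L j i k l /\ L i j k l = L i j l k.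
Definition major_sym (L : tensor4) : Prop :=
  forall i j k l, L i j k l = L k l i j.
Definition posdef_sym (L : tensor4) : Prop :=
  forall xi : 'M[R]_3, xi^T = xi -> xi != 0 ->
    0 < \sum_(i < 3) \sum_(j < 3) \sum_(k < 3) \sum_(l < 3)
          xi i j * L i j k l * xi k l.

Definition ddot (L : tensor4) (xi : 'M[R]_3) : 'M[R]_3 :=
  \matrix_(i < 3, j < 3) \sum_(k < 3) \sum_(l < 3) L i j k l * xi k l.
Definition ddotC (L : tensor4) (xi : 'M[C]_3) : 'M[C]_3 :=
  \matrix_(i < 3, j < 3) \sum_(k < 3) \sum_(l < 3) toC (L i j k l) * xi k l.

Definition symt (a b : 'cV[C]_3) : 'M[C]_3 :=
  \matrix_(i < 3, j < 3) ((a i ord0 * b j ord0 + a j ord0 * b i ord0) / 2).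

(* discrete derivatives of a scalar field f on P, evaluated at r in S *)
Definition Dplus (f : 'cV[R]_3 -> R) (r : 'cV[R]_3) (i : 'I_3) : R :=
  \sum_(e <- Tset) e i ord0 * f (r + e).
Definition Dminus (f : 'cV[R]_3 -> R) (r : 'cV[R]_3) (i : 'I_3) : R :=
  - \sum_(e <- Tset) e i ord0 * f (r - e).

(* m = 1 uses D^+ (b = true), m = 2 uses D^- (b = false) *)
Definition Dpm (b : bool) := if b then Dplus else Dminus.

Definition deps (b : bool) (u : 'cV[R]_3 -> 'cV[R]_3) (r : 'cV[R]_3)
  : 'M[R]_3 :=
  \matrix_(i < 3, j < 3)
    ((Dpm b (fun x => u x j ord0) r i + Dpm b (fun x => u x i ord0) r j) / 2).

Definition epsm (b : bool) (epsbar : 'M[R]_3) u r : 'M[R]_3 :=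
  epsbar + deps b u r.

Definition sigmam (b : bool) (lam : 'cV[R]_3 -> tensor4)
  (eps0 : 'cV[R]_3 -> 'M[R]_3) epsbar u r : 'M[R]_3 :=
  ddot (lam r) (epsm b epsbar u r - eps0 r).

Definition taum (b : bool) (lam : 'cV[R]_3 -> tensor4)
  (eps0 : 'cV[R]_3 -> 'M[R]_3) (lam0 : tensor4) epsbar u r : 'M[R]_3 :=
  sigmam b lam eps0 epsbar u r - ddot lam0 (epsm b epsbar u r).

Definition Mmat (lam0 : tensor4) (q : 'cV[R]_3) : 'M[C]_3 :=
  let D := Dvec q in
  \matrix_(j < 3, k < 3) \sum_(i < 3) \sum_(l < 3)
     toC (lam0 i j k l) *
       (conjc (D i ord0) * D l ord0 + D i ord0 * conjc (D l ord0)).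

Definition Omega (lam0 : tensor4) (q : 'cV[R]_3) : 'M[C]_3 :=
  if Dvec q == 0 then 0 else invmx (Mmat lam0 q).

End Defs.

(* Main.v *)
Require Import Defs.
From HB Require Import structures.
From mathcomp Require Import all_boot all_order all_algebra.
From mathcomp Require Import reals trigo.
From mathcomp Require Import complex.
From mathcomp Require Import ring lra.
Import Order.TTheory GRing.Theory Num.Theory.
Local Open Scope ring_scope.
Section Shift.
Variable V : zmodType.
Lemma shift_pos (N : nat) (F : int -> V) : (0 < N)%N ->
  (forall k, F (k + N%:Z) = F k) -> forall n : nat,
  \sum_(a < N) F (a%:Z + n%:Z) = \sum_(a < N) F a%:Z.
Proof.
move=> N0 Fp n; elim: n F Fp => [|n IH] F Fp.
  by apply: eq_bigr => a _; rewrite addr0.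
have -> : \sum_(a < N) F (a%:Z + n.+1%:Z) = \sum_(a < N) F (a.+1%:Z + n%:Z).
  by apply: eq_bigr => a _; congr F; rewrite -!PoszD addnS.
rewrite -(IH F Fp).
clear IH; move: Fp; case: N N0 => // N _ Fp.
rewrite big_ord_recr big_ord_recl /=.
rewrite addrC; congr (_ + _).
by rewrite add0r addrC Fp.
Qed.

Lemma shift_sum (N : nat) (F : int -> V) : (0 < N)%N ->
  (forall k, F (k + N%:Z) = F k) -> forall s : int,
  \sum_(a < N) F (a%:Z + s) = \sum_(a < N) F a%:Z.
Proof.
move=> N0 Fp [n|n]; first exact: shift_pos.
rewrite NegzE.
set G := fun k => F (k - n.+1%:Z).
have Gp : forall k, G (k + N%:Z) = G k.
  by move=> k; rewrite /G addrAC Fp.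
rewrite -(shift_pos N G N0 Gp n.+1).
by apply: eq_bigr => a _; rewrite /G addrK.
Qed.
End Shift.
Section Vec.
Variable R : realType.
Local Notation C := (R[i]).

Ltac vtac := apply/matrixP; case => [[|[|[|?]]]] ? ?; rewrite !mxE; by [].

Lemma vec3D (a b c x y z : R) : vec3 a b c + vec3 x y z = vec3 (a + x) (b + y) (c + z).
Proof. vtac. Qed.

Lemma vec3N (a b c : R) : - vec3 a b c = vec3 (- a) (- b) (- c).
Proof. vtac. Qed.

Lemma vec30 : (0 : 'cV[R]_3) = vec3 0 0 0.
Proof. vtac. Qed.

Lemma dotp_vec3 (a b c x y z : R) : dotp (vec3 a b c) (vec3 x y z) = a * x + b * y + c * z.
Proof. rewrite /dotp !big_ord_recr big_ord0 !mxE /= add0r. reflexivity. Qed.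

Lemma dotpD (q x y : 'cV[R]_3) : dotp q (x + y) = dotp q x + dotp q y.
Proof. by rewrite /dotp -big_split; apply: eq_bigr => i _; rewrite mxE mulrDr. Qed.

Lemma dotpN (q x : 'cV[R]_3) : dotp q (- x) = - dotp q x.
Proof. by rewrite /dotp -sumrN; apply: eq_bigr => i _; rewrite mxE mulrN. Qed.

Lemma expiD (s t : R) : expi (s + t) = expi s * expi t.
Proof. rewrite /expi cosD sinD. rewrite -[((_ +i* _)%C * (_ +i* _)%C)]/(_ +i* _)%C. congr Complex; ring. Qed.

Lemma expi0 : expi (0 : R) = 1.
Proof. rewrite /expi cos0 sin0. reflexivity. Qed.

Lemma expiNK (t : R) : expi (- t) * expi t = 1.
Proof. by rewrite -expiD addNr expi0. Qed.

Lemma expi_neq0 (t : R) : expi t != 0.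
Proof. apply/eqP => H; have := expiNK t; rewrite H mulr0 => /eqP; rewrite eq_sym oner_eq0. by []. Qed.

Lemma conj_expi (t : R) : conjc (expi t) = expi (- t).
Proof. by rewrite /expi cosN sinN. Qed.

Lemma expi_2pi (t : R) (n : nat) : expi (t + 2 * pi * n%:R) = expi t.
Proof.
have -> : 2 * pi * n%:R = (pi *+ 2) *+ n :> R by rewrite -mulrnA -[in RHS]mulr_natr natrM; ring.
by rewrite /expi (periodicn (@cosD2pi R)) (periodicn (@sinD2pi R)).
Qed.

Lemma cos1_0 (t : R) : 0 <= t -> t < 2 * pi -> cos t = 1 -> t = 0.
Proof.
move=> t0 t2 ct.
have st : sin t = 0.
  have h := cos2Dsin2 t; rewrite ct expr1n in h.
  have : sin t ^+ 2 = 0 by rewrite -(addKr 1 (sin t ^+ 2)) h addNr.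
  by move/eqP; rewrite sqrf_eq0 => /eqP.
case: (ltrgtP t pi) => tp.
- case: (ltrgtP 0 t) => t0'; last by [].
  + by have := sin_gt0_pi (introT andP (conj t0' tp)); rewrite st ltxx.
  + by move: t0; rewrite leNgt t0'.
- have : 0 < sin (t - pi) by apply: sin_gt0_pi; apply/andP; split; lra.
  have := sinDpi (t - pi); rewrite subrK st => /eqP; rewrite eq_sym oppr_eq0 => /eqP ->.
  by rewrite ltxx.
- by move: ct; rewrite tp cospi => h; lra.
Qed.

Lemma cos1_04 (t : R) : 0 <= t -> t < 4 * pi -> cos t = 1 -> t = 0 \/ t = 2 * pi.
Proof.
move=> t0 t4 ct.
have pi0 := @pi_gt0 R.
case: (ltP t (2 * pi)) => t2; first by left; exact: cos1_0.
right.
have e : cos (t - 2 * pi) = 1.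
  have := (periodicn (@cosD2pi R)) 1%N (t - 2 * pi).
  by rewrite mulr1n (_ : pi *+ 2 = 2 * pi) ?subrK ?ct // mulr_natl.
have := cos1_0 (t - 2 * pi); lra.
Qed.
End Vec.

Section Shift3.
Variable V : zmodType.
Variables N1 N2 N3 : nat.
Hypotheses (hN1 : (0 < N1)%N) (hN2 : (0 < N2)%N) (hN3 : (0 < N3)%N).
Lemma shift3 (G : int -> int -> int -> V) :
  (forall a b c, G (a + N1%:Z) b c = G a b c) ->
  (forall a b c, G a (b + N2%:Z) c = G a b c) ->
  (forall a b c, G a b (c + N3%:Z) = G a b c) ->
  forall s1 s2 s3,
  \sum_(a < N1) \sum_(b < N2) \sum_(c < N3) G (a%:Z + s1) (b%:Z + s2) (c%:Z + s3)
  = \sum_(a < N1) \sum_(b < N2) \sum_(c < N3) G a b c.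
Proof.
move=> P1 P2 P3 s1 s2 s3.
have e3 : forall a b, \sum_(c < N3) G a b (c%:Z + s3) = \sum_(c < N3) G a b c.
  by move=> a b; apply: (shift_sum V N3 (fun c => G a b c) hN3) => k; apply: P3.
under eq_bigr => a _ do under eq_bigr => b _ do rewrite e3.
have e2 : forall a, \sum_(b < N2) \sum_(c < N3) G a (b%:Z + s2) c = \sum_(b < N2) \sum_(c < N3) G a b c.
  move=> a; apply: (shift_sum V N2 (fun b => \sum_(c < N3) G a b c) hN2) => k.
  by apply: eq_bigr => c _; rewrite P2.
under eq_bigr => a _ do rewrite e2.
apply: (shift_sum V N1 (fun a => \sum_(b < N2) \sum_(c < N3) G a b c) hN1) => k.
by apply: eq_bigr => b _; apply: eq_bigr => c _; rewrite P1.
Qed.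
End Shift3.

Section Fourier.
Variable R : realType.
Local Notation C := (R[i]).
Variables N1 N2 N3 : nat.
Hypotheses (hN1 : (0 < N1)%N) (hN2 : (0 < N2)%N) (hN3 : (0 < N3)%N).

Lemma fhat_ext (base : 'cV[R]_3) (f g : 'cV[R]_3 -> C) q :
  (forall r, f r = g r) -> fhat N1 N2 N3 base f q = fhat N1 N2 N3 base g q.
Proof.
move=> e; rewrite /fhat; congr (_ * _).
by apply: eq_bigr => a _; apply: eq_bigr => b _; apply: eq_bigr => c _; rewrite e.
Qed.

Lemma fhatD base (f g : 'cV[R]_3 -> C) q :
  fhat N1 N2 N3 base (fun r => f r + g r) q = fhat N1 N2 N3 base f q + fhat N1 N2 N3 base g q.
Proof.
rewrite /fhat -mulrDr; congr (_ * _); rewrite -big_split; apply: eq_bigr => a _.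
rewrite -big_split; apply: eq_bigr => b _; rewrite -big_split; apply: eq_bigr => c _.
by rewrite mulrDl.
Qed.

Lemma fhatZ base (x : C) (f : 'cV[R]_3 -> C) q :
  fhat N1 N2 N3 base (fun r => x * f r) q = x * fhat N1 N2 N3 base f q.
Proof.
rewrite /fhat mulrCA; congr (_ * _); rewrite mulr_sumr; apply: eq_bigr => a _.
rewrite mulr_sumr; apply: eq_bigr => b _; rewrite mulr_sumr; apply: eq_bigr => c _.
by rewrite mulrA.
Qed.

Lemma fhatN base (f : 'cV[R]_3 -> C) q :
  fhat N1 N2 N3 base (fun r => - f r) q = - fhat N1 N2 N3 base f q.
Proof.
rewrite -mulN1r -fhatZ; apply: fhat_ext => r; by rewrite mulN1r.
Qed.

Lemma fhatB base (f g : 'cV[R]_3 -> C) q :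
  fhat N1 N2 N3 base (fun r => f r - g r) q = fhat N1 N2 N3 base f q - fhat N1 N2 N3 base g q.
Proof. by rewrite fhatD fhatN. Qed.

Lemma fhat_sum3 base (F : 'I_3 -> 'cV[R]_3 -> C) q :
  fhat N1 N2 N3 base (fun r => \sum_(k < 3) F k r) q = \sum_(k < 3) fhat N1 N2 N3 base (F k) q.
Proof.
rewrite !big_ord_recr big_ord0 /=.
rewrite (fhat_ext _ _ (fun r => (0 + F (widen_ord (leqnSn 2) (widen_ord (leqnSn 1) ord_max)) r
   + F (widen_ord (leqnSn 2) ord_max) r) + F ord_max r)); last first.
  by move=> r; rewrite !big_ord_recr big_ord0.
rewrite !fhatD; congr (_ + _ + _).
rewrite (fhat_ext _ _ (fun r => 0 * 0)); last by move=> r; rewrite mulr0.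
by rewrite fhatZ mul0r.
Qed.

Lemma latD (a b c a' b' c' : int) :
  lat R (a + a') (b + b') (c + c') = lat R a b c + lat R a' b' c'.
Proof. by rewrite /lat vec3D !intrD. Qed.

Lemma dotp_qlat1 (h1 : 'I_N1) (h2 : 'I_N2) (h3 : 'I_N3) :
  dotp (qvec R h1 h2 h3) (lat R N1%:Z 0 0) = 2 * pi * h1%:R.
Proof.
rewrite /qvec /lat dotp_vec3.
have -> : (N1%:Z)%:~R = N1%:R :> R by [].
have n0 : N1%:R != 0 :> R by rewrite pnatr_eq0 -lt0n.
by rewrite !mulr0 !addr0 divfK.
Qed.

Lemma dotp_qlat2 (h1 : 'I_N1) (h2 : 'I_N2) (h3 : 'I_N3) :
  dotp (qvec R h1 h2 h3) (lat R 0 N2%:Z 0) = 2 * pi * h2%:R.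
Proof.
rewrite /qvec /lat dotp_vec3.
have -> : (N2%:Z)%:~R = N2%:R :> R by [].
have n0 : N2%:R != 0 :> R by rewrite pnatr_eq0 -lt0n.
by rewrite !mulr0 addr0 add0r divfK.
Qed.

Lemma dotp_qlat3 (h1 : 'I_N1) (h2 : 'I_N2) (h3 : 'I_N3) :
  dotp (qvec R h1 h2 h3) (lat R 0 0 N3%:Z) = 2 * pi * h3%:R.
Proof.
rewrite /qvec /lat dotp_vec3.
have -> : (N3%:Z)%:~R = N3%:R :> R by [].
have n0 : N3%:R != 0 :> R by rewrite pnatr_eq0 -lt0n.
by rewrite !mulr0 !add0r divfK.
Qed.

Lemma expi_per x y (n : nat) : y = 2 * pi * n%:R -> expi (- (x + y)) = expi (- x) :> C.
Proof. by move=> ->; rewrite -(expi_2pi R _ n) opprD subrK. Qed.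

Lemma fhat_sum_shift base (g : 'cV[R]_3 -> C) (h1 : 'I_N1) (h2 : 'I_N2) (h3 : 'I_N3)
   (s1 s2 s3 : int) :
  periodic_on N1 N2 N3 base g ->
  \sum_(a < N1) \sum_(b < N2) \sum_(c < N3)
     g (base + lat R (a%:Z + s1) (b%:Z + s2) (c%:Z + s3)) *
     expi (- dotp (qvec R h1 h2 h3) (base + lat R (a%:Z + s1) (b%:Z + s2) (c%:Z + s3)))
  = \sum_(a < N1) \sum_(b < N2) \sum_(c < N3)
     g (base + lat R a b c) * expi (- dotp (qvec R h1 h2 h3) (base + lat R a b c)).
Proof.
move=> gp.
pose G := fun a b c : int => g (base + lat R a b c) * expi (- dotp (qvec R h1 h2 h3) (base + lat R a b c)).
apply: (shift3 _ _ _ _ hN1 hN2 hN3 G).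
- move=> a b c; rewrite /G.
  have := gp a b c 1 0 0; rewrite mul1r !mul0r !addr0 => ->.
  have -> : lat R (a + N1%:Z) b c = lat R a b c + lat R N1%:Z 0 0 by rewrite -latD !addr0.
  by rewrite addrA (dotpD R _ (base + lat R a b c)) (expi_per _ _ h1) ?dotp_qlat1.
- move=> a b c; rewrite /G.
  have := gp a b c 0 1 0; rewrite mul1r !mul0r !addr0 => ->.
  have -> : lat R a (b + N2%:Z) c = lat R a b c + lat R 0 N2%:Z 0 by rewrite -latD !addr0.
  by rewrite addrA (dotpD R _ (base + lat R a b c)) (expi_per _ _ h2) ?dotp_qlat2.
- move=> a b c; rewrite /G.
  have := gp a b c 0 0 1; rewrite mul1r !mul0r !addr0 => ->.
  have -> : lat R a b (c + N3%:Z) = lat R a b c + lat R 0 0 N3%:Z by rewrite -latD !addr0.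
  by rewrite addrA (dotpD R _ (base + lat R a b c)) (expi_per _ _ h3) ?dotp_qlat3.
Qed.
End Fourier.

Section Transl.
Variable R : realType.
Local Notation C := (R[i]).
Variables N1 N2 N3 : nat.
Hypotheses (hN1 : (0 < N1)%N) (hN2 : (0 < N2)%N) (hN3 : (0 < N3)%N).
Variables (h1 : 'I_N1) (h2 : 'I_N2) (h3 : 'I_N3).
Local Notation q := (qvec R h1 h2 h3).

Definition shiftable (e : 'cV[R]_3) := exists s1 s2 s3 : int,
  forall k1 k2 k3 : int, baseS R + lat R k1 k2 k3 + e = baseP R + lat R (k1 + s1) (k2 + s2) (k3 + s3).

Lemma fhat_transl (g : 'cV[R]_3 -> C) e :
  periodic_on N1 N2 N3 (baseP R) g -> shiftable e ->
  fhat N1 N2 N3 (baseS R) (fun r => g (r + e)) q = expi (dotp q e) * fhat N1 N2 N3 (baseP R) g q.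
Proof.
move=> gp [s1 [s2 [s3 He]]].
rewrite /fhat mulrCA; congr (_ * _).
rewrite -(fhat_sum_shift R N1 N2 N3 hN1 hN2 hN3 (baseP R) g h1 h2 h3 s1 s2 s3 gp).
rewrite mulr_sumr; apply: eq_bigr => a _.
rewrite mulr_sumr; apply: eq_bigr => b _.
rewrite mulr_sumr; apply: eq_bigr => c _.
rewrite -He (dotpD R _ _ e) opprD expiD.
by rewrite [RHS]mulrC -!mulrA expiNK mulr1.
Qed.

Lemma shiftableE (x y z : R) (s1 s2 s3 : int) :
  x = 1/2 + s1%:~R -> y = 1/2 + s2%:~R -> z = 1/2 + s3%:~R -> shiftable (vec3 x y z).
Proof.
move=> -> -> -> ; exists s1, s2, s3 => k1 k2 k3.
rewrite /baseS /baseP /lat add0r !vec3D !intrD.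
by congr vec3; ring.
Qed.

Lemma fhat_Dsum (f : 'cV[R]_3 -> R) (cf : 'cV[R]_3 -> R) (s : seq 'cV[R]_3) :
  periodic_on N1 N2 N3 (baseP R) f ->
  (forall e, e \in s -> shiftable e) ->
  fhat N1 N2 N3 (baseS R) (fun r => toC (\sum_(e <- s) cf e * f (r + e))) q =
  (\sum_(e <- s) toC (cf e) * expi (dotp q e)) * fhat N1 N2 N3 (baseP R) (fun r => toC (f r)) q.
Proof.
move=> fp; elim: s => [|e s IH] Hs.
  rewrite big_nil mul0r (fhat_ext R N1 N2 N3 _ _ (fun _ => 0 * 0)); last first.
    by move=> r; rewrite big_nil mulr0; reflexivity.
  by rewrite fhatZ mul0r.
rewrite (fhat_ext R N1 N2 N3 _ _ (fun r => toC (cf e) * toC (f (r + e)) +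
           toC (\sum_(e <- s) cf e * f (r + e)))); last first.
  by move=> r; rewrite big_cons /toC rmorphD rmorphM.
rewrite fhatD fhatZ IH; last by move=> e' He'; apply: Hs; rewrite inE He' orbT.
rewrite (fhat_transl (fun r => toC (f r))); last by apply: Hs; rewrite inE eqxx.
  by rewrite big_cons mulrDl mulrA.
by move=> k1 k2 k3 a b c; rewrite fp.
Qed.

Lemma intr_m1 : ((-1 : int)%:~R : R) = -1.
Proof. by rewrite intrN. Qed.
Lemma intr_0 : ((0 : int)%:~R : R) = 0.
Proof. by rewrite mulr0z. Qed.

Lemma Tset_shift e : e \in Tset R -> shiftable e.
Proof.
rewrite !inE => /or4P [] /eqP ->.
- by apply: (shiftableE _ _ _ (0:int) (0:int) (0:int)); rewrite intr_0; ring.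
- by apply: (shiftableE _ _ _ (0:int) (-1:int) (-1:int)); rewrite ?intr_0 ?intr_m1; lra.
- by apply: (shiftableE _ _ _ (-1:int) (0:int) (-1:int)); rewrite ?intr_0 ?intr_m1; lra.
- by apply: (shiftableE _ _ _ (-1:int) (-1:int) (0:int)); rewrite ?intr_0 ?intr_m1; lra.
Qed.

Lemma Tset_shiftN e : e \in Tset R -> shiftable (- e).
Proof.
rewrite !inE => /or4P [] /eqP ->; rewrite vec3N.
- by apply: (shiftableE _ _ _ (-1:int) (-1:int) (-1:int)); rewrite ?intr_0 ?intr_m1; lra.
- by apply: (shiftableE _ _ _ (-1:int) (0:int) (0:int)); rewrite ?intr_0 ?intr_m1; lra.
- by apply: (shiftableE _ _ _ (0:int) (-1:int) (0:int)); rewrite ?intr_0 ?intr_m1; lra.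
- by apply: (shiftableE _ _ _ (0:int) (0:int) (-1:int)); rewrite ?intr_0 ?intr_m1; lra.
Qed.

Lemma conjcM_toC (x : R) (z : C) : conjc (toC x * z) = toC x * conjc z.
Proof.
case: z => a b; rewrite /toC.
rewrite -[((_ +i* _)%C * (_ +i* _)%C)]/(_ +i* _)%C.
rewrite -[((_ +i* _)%C * (_ +i* _)%C)]/(_ +i* _)%C.
rewrite /conjc; congr Complex; ring.
Qed.

Lemma fhat_Dplus (f : 'cV[R]_3 -> R) (i : 'I_3) :
  periodic_on N1 N2 N3 (baseP R) f ->
  fhat N1 N2 N3 (baseS R) (fun r => toC (Dplus f r i)) q =
  Dvec q i ord0 * fhat N1 N2 N3 (baseP R) (fun r => toC (f r)) q.
Proof.
move=> fp; rewrite /Dplus (fhat_Dsum f (fun e => e i ord0)) //; last exact: Tset_shift.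
by rewrite /Dvec mxE.
Qed.

Lemma fhat_Dminus (f : 'cV[R]_3 -> R) (i : 'I_3) :
  periodic_on N1 N2 N3 (baseP R) f ->
  fhat N1 N2 N3 (baseS R) (fun r => toC (Dminus f r i)) q =
  - conjc (Dvec q i ord0) * fhat N1 N2 N3 (baseP R) (fun r => toC (f r)) q.
Proof.
move=> fp.
rewrite (fhat_ext R N1 N2 N3 _ _ (fun r => - toC (\sum_(e <- map -%R (Tset R)) (- e i ord0) * f (r + e)))); last first.
  move=> r; rewrite /Dminus big_map /toC rmorphN; congr (- _%:C)%C.
  by apply: eq_bigr => e _; rewrite mxE opprK.
rewrite fhatN (fhat_Dsum f (fun e => - e i ord0)) //; last first.
  by move=> e /mapP [e' He' ->]; apply: Tset_shiftN.
rewrite mulNr big_map /Dvec mxE rmorph_sum; congr (- (_ * _)).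
apply: eq_bigr => e _; rewrite mxE opprK dotpN -conj_expi.
exact: (esym (conjcM_toC _ _)).
Qed.
End Transl.

Section Hats.
Variable R : realType.
Local Notation C := (R[i]).
Variables N1 N2 N3 : nat.
Hypotheses (hN1 : (0 < N1)%N) (hN2 : (0 < N2)%N) (hN3 : (0 < N3)%N).
Variables (h1 : 'I_N1) (h2 : 'I_N2) (h3 : 'I_N3).
Local Notation q := (qvec R h1 h2 h3).
Variables (lam : 'cV[R]_3 -> tensor4 R) (eps0 : 'cV[R]_3 -> 'M[R]_3)
  (epsbar : 'M[R]_3) (lam0 : tensor4 R) (u : 'cV[R]_3 -> 'cV[R]_3).
Hypothesis u_per : periodic_on N1 N2 N3 (baseP R) u.

Local Notation F := (fhat N1 N2 N3 (baseS R) (fun _ => 1) q).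
Local Notation uh := (vhatP N1 N2 N3 u q).

Lemma toCD (x y : R) : toC (x + y) = toC x + toC y.
Proof. by rewrite /toC rmorphD. Qed.
Lemma toCM (x y : R) : toC (x * y) = toC x * toC y.
Proof. by rewrite /toC rmorphM. Qed.
Lemma toCB (x y : R) : toC (x - y) = toC x - toC y.
Proof. by rewrite /toC rmorphB. Qed.

Lemma toC_half (x : R) : toC (x / 2) = toC x / 2.
Proof. by rewrite /toC rmorphM fmorphV rmorph_nat. Qed.

Lemma uj_per j : periodic_on N1 N2 N3 (baseP R) (fun x => u x j ord0).
Proof. by move=> k1 k2 k3 a b c; rewrite u_per. Qed.

Lemma fhat_const base (x : C) : fhat N1 N2 N3 base (fun _ => x) q = x * fhat N1 N2 N3 base (fun _ => 1) q.
Proof.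
rewrite -fhatZ; apply: fhat_ext => r; by rewrite mulr1.
Qed.

Lemma mhat_eps_true :
  mhatS N1 N2 N3 (epsm true epsbar u) q = F *: map_mx (@toC R) epsbar + symt (Dvec q) uh.
Proof.
apply/matrixP => i j; rewrite !mxE.
rewrite (fhat_ext R N1 N2 N3 _ _ (fun r => toC (epsbar i j) +
    2^-1 * (toC (Dplus (fun x => u x j ord0) r i) + toC (Dplus (fun x => u x i ord0) r j)))); last first.
  by move=> r; rewrite !mxE /Dpm toCD toC_half toCD mulrC.
rewrite fhatD fhat_const fhatZ fhatD !fhat_Dplus //; try exact: uj_per.
rewrite /vhatP !mxE; ring.
Qed.

Lemma mhat_eps_false :
  mhatS N1 N2 N3 (epsm false epsbar u) q = F *: map_mx (@toC R) epsbar - symt (conjv (Dvec q)) uh.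
Proof.
apply/matrixP => i j; rewrite !mxE.
rewrite (fhat_ext R N1 N2 N3 _ _ (fun r => toC (epsbar i j) +
    2^-1 * (toC (Dminus (fun x => u x j ord0) r i) + toC (Dminus (fun x => u x i ord0) r j)))); last first.
  by move=> r; rewrite !mxE /Dpm toCD toC_half toCD mulrC.
rewrite fhatD fhat_const fhatZ fhatD !fhat_Dminus //; try exact: uj_per.
rewrite /vhatP /conjv !mxE; ring.
Qed.

Lemma mhat_tau b :
  mhatS N1 N2 N3 (taum b lam eps0 lam0 epsbar u) q =
  mhatS N1 N2 N3 (sigmam b lam eps0 epsbar u) q - ddotC lam0 (mhatS N1 N2 N3 (epsm b epsbar u) q).
Proof.
apply/matrixP => i j; rewrite !mxE.
rewrite (fhat_ext R N1 N2 N3 _ _ (fun r => toC (sigmam b lam eps0 epsbar u r i j) -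
    \sum_(k < 3) \sum_(l < 3) toC (lam0 i j k l) * toC (epsm b epsbar u r k l))); last first.
  move=> r; rewrite /taum !mxE toCB; congr (_ - _).
  rewrite /toC rmorph_sum; apply: eq_bigr => k _; rewrite rmorph_sum; apply: eq_bigr => l _.
  by rewrite rmorphM.
rewrite fhatB fhat_sum3; congr (_ - _); apply: eq_bigr => k _.
rewrite fhat_sum3; apply: eq_bigr => l _.
by rewrite fhatZ !mxE.
Qed.
End Hats.

Section DZero.
Variable R : realType.
Local Notation C := (R[i]).

Lemma Dvec_expand (a b c : R) i :
  Dvec (vec3 a b c) i ord0 =
    toC ((vec3 (1/2) (1/2) (1/2) : 'cV[R]_3) i ord0) * expi ((a + b + c) / 2)
  + toC ((vec3 (1/2) (-(1/2)) (-(1/2)) : 'cV[R]_3) i ord0) * (expi ((a + b + c) / 2) * expi (- (b + c)))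
  + toC ((vec3 (-(1/2)) (1/2) (-(1/2)) : 'cV[R]_3) i ord0) * (expi ((a + b + c) / 2) * expi (- (a + c)))
  + toC ((vec3 (-(1/2)) (-(1/2)) (1/2) : 'cV[R]_3) i ord0) * (expi ((a + b + c) / 2) * expi (- (a + b))).
Proof.
rewrite /Dvec mxE /Tset !big_cons big_nil addr0 !addrA !dotp_vec3 -!expiD.
have -> : a * (1 / 2) + b * (1 / 2) + c * (1 / 2) = (a + b + c) / 2 by field.
have -> : a * (1 / 2) + b * (- (1 / 2)) + c * (- (1 / 2)) = (a + b + c) / 2 - (b + c) by field.
have -> : a * (- (1 / 2)) + b * (1 / 2) + c * (- (1 / 2)) = (a + b + c) / 2 - (a + c) by field.
have -> : a * (- (1 / 2)) + b * (- (1 / 2)) + c * (1 / 2) = (a + b + c) / 2 - (a + b) by field.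
by [].
Qed.

Lemma D_zero_of_per (a b c : R) :
  expi (- (b + c)) = 1 -> expi (- (a + c)) = 1 -> expi (- (a + b)) = 1 ->
  Dvec (vec3 a b c) = 0.
Proof.
move=> E1 E2 E3; apply/matrixP => i j; rewrite (ord1 j) [RHS]mxE Dvec_expand E1 E2 E3 !mulr1.
rewrite -!mulrDl -!toCD.
have S : (vec3 (1/2) (1/2) (1/2) + vec3 (1/2) (-(1/2)) (-(1/2)) + vec3 (-(1/2)) (1/2) (-(1/2))
          + vec3 (-(1/2)) (-(1/2)) (1/2) : 'cV[R]_3) = 0.
  rewrite !vec3D vec30; congr vec3; ring.
have := congr1 (fun M : 'cV[R]_3 => M i ord0) S; rewrite !mxE => ->.
by rewrite /toC mul0r.
Qed.

Definition i0 : 'I_3 := ord0.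
Definition i1 : 'I_3 := Ordinal (isT : (1 < 3)%N).
Definition i2 : 'I_3 := Ordinal (isT : (2 < 3)%N).

Lemma vec3_i0 (x y z : R) : (vec3 x y z : 'cV[R]_3) i0 ord0 = x.
Proof. by rewrite mxE. Qed.
Lemma vec3_i1 (x y z : R) : (vec3 x y z : 'cV[R]_3) i1 ord0 = y.
Proof. by rewrite mxE. Qed.
Lemma vec3_i2 (x y z : R) : (vec3 x y z : 'cV[R]_3) i2 ord0 = z.
Proof. by rewrite mxE. Qed.

Lemma toC_halfE : toC (1 / 2 : R) = 1 / 2.
Proof. by rewrite /toC rmorphM fmorphV rmorph_nat rmorph1. Qed.

Lemma toCN (x : R) : toC (- x) = - toC x.
Proof. by rewrite /toC rmorphN. Qed.

Lemma two_neq0 : (2 : C) != 0.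
Proof. by rewrite pnatr_eq0. Qed.

Lemma expi_eq1 (t : R) : expi t = 1 -> cos t = 1.
Proof. by move=> /(congr1 (@complex.Re R)). Qed.

Lemma per_of_D_zero (a b c : R) :
  Dvec (vec3 a b c) = 0 ->
  expi (- (b + c)) = 1 /\ expi (- (a + c)) = 1 /\ expi (- (a + b)) = 1.
Proof.
move=> D0.
have H k : Dvec (vec3 a b c) k ord0 = 0 by rewrite D0 mxE.
have A := H i0; have B := H i1; have Cc := H i2.
rewrite Dvec_expand !(vec3_i0, vec3_i1, vec3_i2) !toCN toC_halfE in A.
rewrite Dvec_expand !(vec3_i0, vec3_i1, vec3_i2) !toCN toC_halfE in B.
rewrite Dvec_expand !(vec3_i0, vec3_i1, vec3_i2) !toCN toC_halfE in Cc.
set w := expi ((a + b + c) / 2) in A B Cc.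
have w0 : w != 0 by apply: expi_neq0.
set x1 := expi (- (b + c)) in A B Cc.
set x2 := expi (- (a + c)) in A B Cc.
set x3 := expi (- (a + b)) in A B Cc.
have h2 := two_neq0.
have E3 : w * (1 - x3) = 0.
  have : w * (1 - x3) = (0 + 0) by rewrite -{1}A -{1}B; field.
  by rewrite addr0.
have E2 : w * (1 - x2) = 0.
  have : w * (1 - x2) = (0 + 0) by rewrite -{1}A -{1}Cc; field.
  by rewrite addr0.
have E1 : w * (1 - x1) = 0.
  have : w * (1 - x1) = (0 + 0) by rewrite -{1}B -{1}Cc; field.
  by rewrite addr0.
have F z : w * (1 - z) = 0 -> z = 1.
  by move/eqP; rewrite mulf_eq0 (negPf w0) /= subr_eq0 eq_sym => /eqP.
by split; [|split]; apply: F.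
Qed.

Lemma qbound (N : nat) (h : 'I_N) : 0 <= 2 * pi * h%:R / N%:R :> R /\ 2 * pi * h%:R / N%:R < 2 * pi :> R.
Proof.
have hN : (h < N)%N := ltn_ord h.
have N0 : (0 < N)%N by apply: leq_ltn_trans hN.
have N0r : 0 < N%:R :> R by rewrite ltr0n.
have hNr : h%:R + 1 <= N%:R :> R by rewrite (_ : h%:R + 1 = h.+1%:R) ?ler_nat // -addn1 natrD.
have h0 : 0 <= h%:R :> R by rewrite ler0n.
have pi0 := @pi_gt0 R.
set x := 2 * pi * h%:R / N%:R.
have ex : x * N%:R = 2 * pi * h%:R by rewrite /x divfK // gt_eqF.
split; first by rewrite /x divr_ge0 // mulr_ge0 // mulr_ge0 // ?ler0n ?ltW.
nra.
Qed.

Lemma qvec_D0 (N1 N2 N3 : nat) (h1 : 'I_N1) (h2 : 'I_N2) (h3 : 'I_N3) :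
  Dvec (qvec R h1 h2 h3) = 0 ->
  qvec R h1 h2 h3 = vec3 0 0 0 \/ qvec R h1 h2 h3 = vec3 pi pi pi.
Proof.
rewrite /qvec.
have [b10 b11] := @qbound N1 h1; have [b20 b21] := @qbound N2 h2; have [b30 b31] := @qbound N3 h3.
set a := 2 * pi * h1%:R / N1%:R in b10 b11 *.
set b := 2 * pi * h2%:R / N2%:R in b20 b21 *.
set c := 2 * pi * h3%:R / N3%:R in b30 b31 *.
move=> /per_of_D_zero [E1 [E2 E3]].
have pi0 := @pi_gt0 R.
have := cos1_04 R (b + c); rewrite -cosN (expi_eq1 _ E1).
have := cos1_04 R (a + c); rewrite -cosN (expi_eq1 _ E2).
have := cos1_04 R (a + b); rewrite -cosN (expi_eq1 _ E3).
move=> H3 H2 H1.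
have [S1|S1] : b + c = 0 \/ b + c = 2 * pi by apply: H1 => //; lra.
- left; have -> : b = 0 by lra.
  have -> : c = 0 by lra.
  have [S2|S2] : a + c = 0 \/ a + c = 2 * pi by apply: H2 => //; lra.
    by have -> : a = 0 by lra.
  exfalso; lra.
- have [S2|S2] : a + c = 0 \/ a + c = 2 * pi by apply: H2 => //; lra.
    exfalso; lra.
  have [S3|S3] : a + b = 0 \/ a + b = 2 * pi by apply: H3 => //; lra.
    exfalso; lra.
  right; have -> : a = pi by lra.
  have -> : b = pi by lra.
  by have -> : c = pi by lra.
Qed.
End DZero.

Section FD.
Variable R : realType.
Local Notation C := (R[i]).
Variables N1 N2 N3 : nat.
Hypotheses (hN1 : (0 < N1)%N) (hN2 : (0 < N2)%N) (hN3 : (0 < N3)%N).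
Variables (h1 : 'I_N1) (h2 : 'I_N2) (h3 : 'I_N3).
Local Notation q := (qvec R h1 h2 h3).
Local Notation F := (fhat N1 N2 N3 (baseS R) (fun _ => 1) q).

Lemma F_shift (t1 t2 t3 : int) : F = expi (- dotp q (lat R t1 t2 t3)) * F.
Proof.
rewrite /fhat mulrCA; congr (_ * _).
rewrite -{1}(fhat_sum_shift R N1 N2 N3 hN1 hN2 hN3 (baseS R) (fun _ => 1) h1 h2 h3 t1 t2 t3) //.
rewrite mulr_sumr; apply: eq_bigr => a _.
rewrite mulr_sumr; apply: eq_bigr => b _.
rewrite mulr_sumr; apply: eq_bigr => c _.
rewrite latD addrA (dotpD R _ _ (lat R t1 t2 t3)) opprD expiD.
by rewrite !mul1r mulrC.
Qed.

Lemma F_one (t1 t2 t3 : int) : F != 0 -> expi (- dotp q (lat R t1 t2 t3)) = 1.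
Proof.
move=> F0; have := F_shift t1 t2 t3.
move/eqP; rewrite -subr_eq0 -{1}[F]mul1r -mulrBl mulf_eq0 (negPf F0) orbF subr_eq0.
by move/eqP.
Qed.

Lemma F_D : F != 0 -> Dvec q = 0.
Proof.
move=> F0.
have E1 := F_one 0 1 1 F0; have E2 := F_one 1 0 1 F0; have E3 := F_one 1 1 0 F0.
rewrite /qvec /lat !dotp_vec3 !mulr0z !mulr1z !mulr0 !mulr1 ?add0r ?addr0 in E1 E2 E3.
by rewrite /qvec; apply: D_zero_of_per.
Qed.
End FD.

Lemma sym_sum (T : numFieldType) (A : 'I_3 -> 'I_3 -> T) (y z : 'I_3 -> T) :
  (forall k l, A k l = A l k) ->
  \sum_(k < 3) \sum_(l < 3) A k l * ((y k * z l + y l * z k) / 2)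
  = \sum_(k < 3) \sum_(l < 3) A k l * (y k * z l).
Proof.
move=> As.
have two : (2 : T) != 0 by rewrite pnatr_eq0.
have -> : \sum_(k < 3) \sum_(l < 3) A k l * ((y k * z l + y l * z k) / 2)
  = (\sum_(k < 3) \sum_(l < 3) A k l * (y k * z l)) / 2
    + (\sum_(k < 3) \sum_(l < 3) A k l * (y l * z k)) / 2.
  rewrite !mulr_suml -big_split; apply: eq_bigr => k _.
  rewrite !mulr_suml -big_split; apply: eq_bigr => l _.
  by rewrite /=; ring.
have -> : \sum_(k < 3) \sum_(l < 3) A k l * (y l * z k) = \sum_(k < 3) \sum_(l < 3) A k l * (y k * z l).
  rewrite exchange_big; apply: eq_bigr => k _; apply: eq_bigr => l _.
  by rewrite As.
by field.
Qed.

Section Alg.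
Variable R : realType.
Local Notation C := (R[i]).
Variable L : tensor4 R.
Hypothesis Lmin : minor_sym L.

Definition Mx (x : 'cV[C]_3) : 'M[C]_3 :=
  \matrix_(j < 3, k < 3) \sum_(i < 3) \sum_(l < 3)
     toC (L i j k l) * (conjc (x i ord0) * x l ord0 + x i ord0 * conjc (x l ord0)).

Lemma Mmat_Mx q : Mmat L q = Mx (Dvec q).
Proof. by []. Qed.

Lemma ddot_symt (x v : 'cV[C]_3) i j :
  (ddotC L (symt x v)) i j = \sum_(k < 3) \sum_(l < 3) toC (L i j k l) * (x k ord0 * v l ord0).
Proof.
rewrite mxE.
have -> : \sum_(k < 3) \sum_(l < 3) toC (L i j k l) * symt x v k l =
   \sum_(k < 3) \sum_(l < 3) toC (L i j k l) * ((x k ord0 * v l ord0 + x l ord0 * v k ord0) / 2).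
  by apply: eq_bigr => k _; apply: eq_bigr => l _; rewrite mxE.
apply: (sym_sum _ (fun k l => toC (L i j k l)) (fun k => x k ord0) (fun l => v l ord0)).
by move=> k l; have [_ H] := Lmin i j k l; rewrite H.
Qed.

Lemma comb (x v : 'cV[C]_3) :
  ddotC L (symt x v) *m conjv x + ddotC L (symt (conjv x) v) *m x = Mx x *m v.
Proof.
apply/matrixP => i z; rewrite (ord1 z) !mxE.
have -> : \sum_(j < 3) ddotC L (symt x v) i j * conjv x j ord0 =
  \sum_(j < 3) \sum_(k < 3) \sum_(l < 3) toC (L i j k l) * (x k ord0 * v l ord0) * conjc (x j ord0).
  apply: eq_bigr => j _; rewrite ddot_symt mulr_suml; apply: eq_bigr => k _.
  by rewrite mulr_suml /conjv mxE.
have -> : \sum_(j < 3) ddotC L (symt (conjv x) v) i j * x j ord0 =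
  \sum_(j < 3) \sum_(k < 3) \sum_(l < 3) toC (L i j k l) * (conjc (x k ord0) * v l ord0) * x j ord0.
  apply: eq_bigr => j _; rewrite ddot_symt mulr_suml; apply: eq_bigr => k _.
  by rewrite mulr_suml; apply: eq_bigr => l _; rewrite /conjv mxE.
rewrite -big_split /=.
have -> : \sum_(l < 3) Mx x i l * v l ord0 =
   \sum_(l < 3) \sum_(j < 3) \sum_(k < 3) toC (L i j k l) *
     (conjc (x j ord0) * x k ord0 + x j ord0 * conjc (x k ord0)) * v l ord0.
  apply: eq_bigr => l _; rewrite mxE mulr_suml; apply: eq_bigr => j _.
  rewrite mulr_suml; apply: eq_bigr => k _.
  have [H1 _] := Lmin j i l k; have [_ H2] := Lmin i j l k.
  by rewrite H1 H2.
rewrite exchange_big /=; apply: eq_bigr => j _.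
rewrite -big_split [RHS]exchange_big /=; apply: eq_bigr => k _.
rewrite -big_split /=; apply: eq_bigr => l _.
rewrite /=; ring.
Qed.
End Alg.

Section Quad.
Variable R : realType.
Variable L : tensor4 R.
Hypothesis Lmin : minor_sym L.
Hypothesis Lpd : posdef_sym L.

Definition Pq (a r : 'I_3 -> R) := \sum_(i < 3) \sum_(j < 3) \sum_(k < 3) \sum_(l < 3)
   a i * r j * L i j k l * (a k * r l).
Definition xi (a r : 'I_3 -> R) : 'M[R]_3 := \matrix_(i < 3, j < 3) ((a i * r j + a j * r i) / 2).

Lemma Pq_xi a r : \sum_(i < 3) \sum_(j < 3) \sum_(k < 3) \sum_(l < 3)
          xi a r i j * L i j k l * xi a r k l = Pq a r.
Proof.
pose S i j := \sum_(k < 3) \sum_(l < 3) L i j k l * (a k * r l).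
have e1 : forall i j, \sum_(k < 3) \sum_(l < 3) xi a r i j * L i j k l * xi a r k l
   = S i j * ((a i * r j + a j * r i) / 2).
  move=> i j.
  transitivity (xi a r i j * \sum_(k < 3) \sum_(l < 3) L i j k l * ((a k * r l + a l * r k) / 2)).
    rewrite mulr_sumr; apply: eq_bigr => k _; rewrite mulr_sumr; apply: eq_bigr => l _.
    by rewrite !mxE; ring.
  rewrite (sym_sum _ (fun k l => L i j k l) a r); last first.
    by move=> k l; have [_ H] := Lmin i j k l; rewrite H.
  by rewrite mxE mulrC.
under eq_bigr => i _ do under eq_bigr => j _ do rewrite e1.
rewrite (sym_sum _ S a r); last first.
  move=> i j; rewrite /S; apply: eq_bigr => k _; apply: eq_bigr => l _.
  by have [H _] := Lmin i j k l; rewrite H.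
rewrite /Pq /S; apply: eq_bigr => i _; apply: eq_bigr => j _.
rewrite mulr_suml; apply: eq_bigr => k _; rewrite mulr_suml; apply: eq_bigr => l _.
ring.
Qed.

Lemma xi_sym a r : (xi a r)^T = xi a r.
Proof. by apply/matrixP => i j; rewrite !mxE addrC. Qed.

Lemma Pq_ge0 a r : 0 <= Pq a r.
Proof.
rewrite -Pq_xi; have [->|nz] := eqVneq (xi a r) 0.
  apply: sumr_ge0 => i _; apply: sumr_ge0 => j _.
  apply: sumr_ge0 => k _; apply: sumr_ge0 => l _; by rewrite !mxE !mul0r.
by apply: ltW; apply: Lpd => //; apply: xi_sym.
Qed.

Lemma Pq_eq0 a r : Pq a r = 0 -> xi a r = 0.
Proof.
move=> P0; apply/eqP; apply: contraT => nz.
by have := Lpd (xi a r) (xi_sym a r) nz; rewrite Pq_xi P0 ltxx.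
Qed.

Lemma xi_eq0 a r j : xi a r = 0 -> r j != 0 -> forall i, a i = 0.
Proof.
move=> X rj i.
have E : forall i j, a i * r j + a j * r i = 0.
  move=> i' j'; have := congr1 (fun M : 'M[R]_3 => M i' j') X; rewrite !mxE.
  by move/eqP; rewrite mulf_eq0 invr_eq0 pnatr_eq0 orbF => /eqP.
have aj : a j = 0.
  have := E j j; rewrite -mulr2n => /eqP; rewrite mulrn_eq0 /= mulf_eq0 (negPf rj) orbF.
  by move/eqP.
have := E i j; rewrite aj mul0r addr0 => /eqP; rewrite mulf_eq0 (negPf rj) orbF.
by move/eqP.
Qed.

Lemma sum4_perm (F : 'I_3 -> 'I_3 -> 'I_3 -> 'I_3 -> R) :
  \sum_(i < 3) \sum_(j < 3) \sum_(k < 3) \sum_(l < 3) F i j k l =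
  \sum_(j < 3) \sum_(k < 3) \sum_(i < 3) \sum_(l < 3) F i j k l.
Proof.
rewrite exchange_big /=; apply: eq_bigr => j _.
by rewrite exchange_big.
Qed.

Lemma Pq_swap a r : Pq a r =
  \sum_(j < 3) \sum_(k < 3) \sum_(i < 3) \sum_(l < 3) a i * r j * L i j k l * (a l * r k).
Proof.
rewrite -sum4_perm /Pq; apply: eq_bigr => i _; apply: eq_bigr => j _.
rewrite exchange_big /=; apply: eq_bigr => k _; apply: eq_bigr => l _.
by have [_ H] := Lmin i j l k; rewrite H.
Qed.
End Quad.

Section Unit.
Variable R : realType.
Local Notation C := (R[i]).
Variable L : tensor4 R.
Hypothesis Lmin : minor_sym L.
Hypothesis Lpd : posdef_sym L.

Definition Mr (x : 'cV[C]_3) : 'M[R]_3 := \matrix_(j < 3, k < 3) \sum_(i < 3) \sum_(l < 3)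
  L i j k l * (2 * (complex.Re (x i ord0) * complex.Re (x l ord0) + complex.Im (x i ord0) * complex.Im (x l ord0))).

Lemma conj_ident (z w : C) :
  conjc z * w + z * conjc w = ((2 * (complex.Re z * complex.Re w + complex.Im z * complex.Im w))%:C)%C.
Proof.
case: z => a b; case: w => c d; rewrite /conjc /=.
rewrite -[((_ +i* _)%C * (_ +i* _)%C)]/(_ +i* _)%C.
rewrite -[((_ +i* _)%C * (_ +i* _)%C)]/(_ +i* _)%C.
rewrite -[((_ +i* _)%C + (_ +i* _)%C)]/(_ +i* _)%C.
congr Complex; ring.
Qed.

Lemma Mx_map x : Mx R L x = map_mx (real_complex R) (Mr x).
Proof.
apply/matrixP => j k; rewrite !mxE rmorph_sum; apply: eq_bigr => i _.
rewrite rmorph_sum; apply: eq_bigr => l _.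
by rewrite rmorphM conj_ident.
Qed.

Lemma Mr_unit x : x != 0 -> Mr x \in unitmx.
Proof.
move=> x0; rewrite unitmxE unitfE; apply/negP => /det0P [r r0 rM].
set a := fun i => complex.Re (x i ord0).
set b := fun i => complex.Im (x i ord0).
set rr := fun j => r ord0 j.
have Q : \sum_(j < 3) \sum_(k < 3) rr j * Mr x j k * rr k = 0.
  rewrite exchange_big /=; apply: big1 => k _.
  have := congr1 (fun M : 'rV[R]_3 => M ord0 k) rM; rewrite !mxE => E.
  by rewrite -mulr_suml E mul0r.
have Q2 : \sum_(j < 3) \sum_(k < 3) rr j * Mr x j k * rr k = 2 * (Pq R L a rr + Pq R L b rr).
  rewrite !Pq_swap // -big_split mulr_sumr; apply: eq_bigr => j _.
  rewrite -big_split mulr_sumr; apply: eq_bigr => k _.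
  rewrite mxE -big_split mulr_sumr mulr_suml mulr_sumr; apply: eq_bigr => i _.
  rewrite -big_split mulr_sumr mulr_suml mulr_sumr; apply: eq_bigr => l _.
  rewrite /a /b /=; ring.
have pa := Pq_ge0 _ _ Lmin Lpd a rr; have pb := Pq_ge0 _ _ Lmin Lpd b rr.
have Pa : Pq R L a rr = 0 by lra.
have Pb : Pq R L b rr = 0 by lra.
have [j rj] : exists j, rr j != 0.
  apply/existsP; apply: contraT => /existsPn H; move/eqP: r0 => r0; exfalso; apply: r0.
  apply/matrixP => i j; rewrite (ord1 i) mxE; exact/eqP/negPn/H.
have A0 := xi_eq0 _ _ _ _ (Pq_eq0 _ _ Lmin Lpd _ _ Pa) rj.
have B0 := xi_eq0 _ _ _ _ (Pq_eq0 _ _ Lmin Lpd _ _ Pb) rj.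
move/eqP: x0 => x0; apply: x0; apply/matrixP => i z; rewrite (ord1 z) mxE.
have := A0 i; have := B0 i; rewrite /a /b; case: (x i ord0) => c d /= -> ->.
by [].
Qed.
End Unit.

Section Final.
Variable R : realType.
Local Notation C := (R[i]).

Lemma part2 (lam0 : tensor4 R) (Lmin : minor_sym lam0) (Lpd : posdef_sym lam0)
  (q : 'cV[R]_3) (v : 'cV[C]_3) :
  (Dvec q = 0 -> v = 0) ->
  Omega lam0 q *m (ddotC lam0 (symt (Dvec q) v) *m conjv (Dvec q)
                    + ddotC lam0 (symt (conjv (Dvec q)) v) *m Dvec q) = v.
Proof.
move=> Hv; rewrite /Omega; case: eqP => [D0|Dn].
  by rewrite mul0mx (Hv D0).
rewrite comb // -Mmat_Mx mulKmx //.
rewrite Mmat_Mx Mx_map map_unitmx; apply: Mr_unit => //.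
by apply/eqP.
Qed.

Lemma ddotC_D (L : tensor4 R) (A B : 'M[C]_3) : ddotC L (A + B) = ddotC L A + ddotC L B.
Proof.
apply/matrixP => i j; rewrite !mxE -big_split; apply: eq_bigr => k _.
rewrite -big_split; apply: eq_bigr => l _; by rewrite mxE mulrDr.
Qed.

Lemma ddotC_N (L : tensor4 R) (A : 'M[C]_3) : ddotC L (- A) = - ddotC L A.
Proof.
apply/matrixP => i j; rewrite !mxE -sumrN; apply: eq_bigr => k _.
rewrite -sumrN; apply: eq_bigr => l _; by rewrite mxE mulrN.
Qed.

Lemma ddotC_Z (L : tensor4 R) (c : C) (A : 'M[C]_3) : ddotC L (c *: A) = c *: ddotC L A.
Proof.
apply/matrixP => i j; rewrite !mxE mulr_sumr; apply: eq_bigr => k _.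
rewrite mulr_sumr; apply: eq_bigr => l _; by rewrite mxE mulrCA.
Qed.

Lemma vec_ident (X1 X2 Y1 Y2 Z1 Z2 : 'cV[C]_3) (c : C) :
  - (X1 - (c *: Y1 + Z1)) + (X2 - (c *: Y2 - Z2)) =
  - (X1 - X2) + c *: (Y1 - Y2) + (Z1 + Z2).
Proof. apply/matrixP => i j; rewrite !mxE; ring. Qed.
End Final.

Theorem mainTheorem6 (R : realType) (N1 N2 N3 : nat)
  (hN1 : (0 < N1)%N) (hN2 : (0 < N2)%N) (hN3 : (0 < N3)%N)
  (eN1 : ~~ odd N1) (eN2 : ~~ odd N2) (eN3 : ~~ odd N3)
  (lam : 'cV[R]_3 -> tensor4 R) (eps0 : 'cV[R]_3 -> 'M[R]_3)
  (epsbar : 'M[R]_3) (lam0 : tensor4 R) (u : 'cV[R]_3 -> 'cV[R]_3)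
  (lam_per : periodic_on N1 N2 N3 (baseS R) lam)
  (lam_minor : forall r, minor_sym (lam r))
  (lam_major : forall r, major_sym (lam r))
  (eps0_per : periodic_on N1 N2 N3 (baseS R) eps0)
  (eps0_sym : forall r, (eps0 r)^T = eps0 r)
  (epsbar_sym : epsbar^T = epsbar)
  (lam0_minor : minor_sym lam0) (lam0_major : major_sym lam0)
  (lam0_pd : posdef_sym lam0)
  (u_per : periodic_on N1 N2 N3 (baseP R) u)
  (u0 : vhatP N1 N2 N3 u (vec3 0 0 0) = 0)
  (upi : vhatP N1 N2 N3 u (vec3 pi pi pi) = 0) :
  (forall (h1 : 'I_N1) (h2 : 'I_N2) (h3 : 'I_N3),
     let q := qvec R h1 h2 h3 in
     let D := Dvec q in
     let sig1 := mhatS N1 N2 N3 (sigmam true lam eps0 epsbar u) q in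
     let sig2 := mhatS N1 N2 N3 (sigmam false lam eps0 epsbar u) q in
     let tau1 := mhatS N1 N2 N3 (taum true lam eps0 lam0 epsbar u) q in
     let tau2 := mhatS N1 N2 N3 (taum false lam eps0 lam0 epsbar u) q in
     Omega lam0 q *m (- (tau1 *m conjv D) + tau2 *m D)
     = vhatP N1 N2 N3 u q - Omega lam0 q *m (sig1 *m conjv D - sig2 *m D))
  /\
  (forall (h1 : 'I_N1) (h2 : 'I_N2) (h3 : 'I_N3) (v : 'cV[R[i]]_3),
     let q := qvec R h1 h2 h3 in
     let D := Dvec q in
     (D = 0 -> v = 0) ->
     Omega lam0 q *m (ddotC lam0 (symt D v) *m conjv D
                      + ddotC lam0 (symt (conjv D) v) *m D)
     = v).
Proof.
have P2 := part2 _ _ lam0_minor lam0_pd.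
split; last first.
  move=> h1 h2 h3 v; cbv zeta => Hv; exact: P2.
move=> h1 h2 h3; cbv zeta.
set q := qvec R h1 h2 h3.
rewrite !mhat_tau mhat_eps_true // mhat_eps_false //.
set F := fhat N1 N2 N3 (baseS R) (fun=> 1) q.
set D := Dvec q.
set uh := vhatP N1 N2 N3 u q.
set E := map_mx (@toC R) epsbar.
set s1 := mhatS N1 N2 N3 (sigmam true lam eps0 epsbar u) q.
set s2 := mhatS N1 N2 N3 (sigmam false lam eps0 epsbar u) q.
rewrite !ddotC_D ddotC_N !ddotC_Z !mulmxBl !mulmxDl -!scalemxAl.
rewrite vec_ident mulmxDr mulmxDr P2; last first.
  move=> D0; have [E0|E0] := qvec_D0 _ _ _ _ _ _ _ D0.
    by rewrite /uh /q E0 u0.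
  by rewrite /uh /q E0 upi.
rewrite [X in X + uh]mulmxDr.
have -> : Omega lam0 q *m (F *: (ddotC lam0 E *m conjv D - ddotC lam0 E *m D)) = 0.
  have [F0|F0] := eqVneq F 0; first by rewrite F0 scale0r mulmx0.
  by rewrite /Omega (F_D _ _ _ _ hN1 hN2 hN3 _ _ _ F0) eqxx mul0mx.
rewrite addr0 mulmxN mulmxBr addrC mulmxN. by [].
Qed.
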